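(* Let $\phi\colon F\to G$ and $\psi\colon G\to H$ be transformations (of types $|\alpha|\xrightarrow{\sigma}n\xleftarrow{\tau}|\beta|$ and $|\beta|\xrightarrow{\eta}m\xleftarrow{\theta}|\gamma|$, with $F\colon\mathbb B^\alpha\to\mathbb C$, $G\colon\mathbb B^\beta\to\mathbb C$, $H\colon\mathbb B^\gamma\to\mathbb C$) which are dinatural in all their variables. If the composite graph $\Gamma(\psi)\circ\Gamma(\phi)$ is acyclic, then $\psi\circ\phi$ is dinatural in all its variables.
   Context: Notation: for $k\in\mathbb N$, $k$ also denotes $\{1,\dots,k\}$. For $\alpha\in\{+,-\}^*$, $\mathbb B^\alpha=\mathbb B^{\alpha_1}\times\cdots\times\mathbb B^{\alpha_{|\alpha|}}$ with $\mathbb B^+=\mathbb B$, $\mathbb B^-=\mathbb B^{op}$. For $\mathbf A=(A_1,\dots,A_n)$ and $\sigma\colon k\to n$, $\mathbf A\sigma=(A_{\sigma1},\dots,A_{\sigma k})$. A morphism $f\colon A\to B$ placed in a contravariant argument is regarded as a morphism $B\to A$ of $\mathbb B^{op}$. A transformation $\phi\colon F\to G$ of type $|\alpha|\xrightarrow{\sigma}n\xleftarrow{\tau}|\beta|$ ($\sigma,\tau$ arbitrary functions) is a family $\phi_{\mathbf A}\colon F(\mathbf A\sigma)\to G(\mathbf A\tau)$, $\mathbf A\in\mathrm{Ob}(\mathbb B)^n$; $A_i$ is its $i$-th variable. $\mathbf A[X,Y/i]\sigma$ is the tuple whose $j$-th entry is $X$ if $\sigma j=i,\alpha_j=-$, $Y$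 if $\sigma j=i,\alpha_j=+$, and $A_{\sigma j}$ (or $1_{A_{\sigma j}}$ when $X,Y$ are morphisms) otherwise; $\mathbf A[X/i]=\mathbf A[X,X/i]$. $\phi$ is dinatural in its $i$-th variable if for all objects $A_j$ ($j\neq i$) and all $f\colon A\to B$: $G(\mathbf A[A,f/i]\tau)\circ\phi_{\mathbf A[A/i]}\circ F(\mathbf A[f,A/i]\sigma)=G(\mathbf A[f,B/i]\tau)\circ\phi_{\mathbf A[B/i]}\circ F(\mathbf A[B,f/i]\sigma)$. Vertical composite: with $\zeta\colon n\to l$, $\xi\colon m\to l$ a pushout of $\tau,\eta$ in finite sets, $\psi\circ\phi$ has type $|\alpha|\xrightarrow{\zeta\sigma}l\xleftarrow{\xi\theta}|\gamma|$ and components $(\psi\circ\phi)_{\mathbf A}=\psi_{\mathbf A\xi}\circ\phi_{\mathbf A\zeta}$. Composite graph $\Gamma(\psi)\circ\Gamma(\phi)$: directed bipartite graph with places the disjoint union of $|\alpha|,|\beta|,|\gamma|$ and transitions $n\sqcup m$. For $t\in n$: arc from place $j$ of the $\alpha$-block to $t$ iff $\sigma j=t,\alpha_j=+$; from $t$ to it iff $\sigma j=t,\alpha_j=-$; arc from place $j$ of the $\beta$-block to $t$ iff $\tau j=t,\beta_j=-$; from $t$ to it iff $\tau j=t,\beta_j=+$. For $t\in m$: arc from place $j$ of the $\beta$-block to $t$ iff $\eta j=t,\beta_j=+$; from $t$ to it iff $\eta j=t,\beta_j=-$; arc from place $j$ of the $\gamma$-block to $t$ iff $\theta j=t,\gamma_j=-$;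 from $t$ to it iff $\theta j=t,\gamma_j=+$. Acyclic means without directed cycles. *)

(* Defs.v *)
From mathcomp Require Import all_boot.
Set Implicit Arguments. Unset Strict Implicit. Unset Printing Implicit Defensive.

Record Cat := {
  ob :> Type;
  hom : ob -> ob -> Type;
  idm : forall x, hom x x;
  cmp : forall x y z, hom y z -> hom x y -> hom x z;
  cmp_idl : forall x y (f : hom x y), cmp (idm y) f = f;
  cmp_idr : forall x y (f : hom x y), cmp f (idm x) = f;
  cmp_assoc : forall x y z w (h : hom z w) (g : hom y z) (f : hom x y),
      cmp h (cmp g f) = cmp (cmp h g) f }.
Arguments hom {c}.
Arguments idm {c} x.
Arguments cmp {c x y z}.

(* Variance: true = '+', false = '-'.  A morphism X -> Y of B^c. *)
Definition mhom (B : Cat) (c : bool) (x y : B) : Type :=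
  if c then hom x y else hom y x.
Arguments mhom : clear implicits.

Definition mid (B : Cat) (c : bool) (x : B) : mhom B c x x :=
  match c as c0 return mhom B c0 x x with true => idm x | false => idm x end.
Arguments mid : clear implicits.

Definition mcomp (B : Cat) (c : bool) (x y z : B) :
  mhom B c y z -> mhom B c x y -> mhom B c x z :=
  match c as c0 return mhom B c0 y z -> mhom B c0 x y -> mhom B c0 x z with
  | true => fun g f => cmp g f
  | false => fun g f => cmp f g
  end.

Definition mcast (B : Cat) (c : bool) (x y : B) (e : x = y) : mhom B c x y :=
  match e in _ = y0 return mhom B c x y0 with erefl => mid B c x end.
Arguments mcast : clear implicits.
Arguments mcast B c {x y}.

(* morphisms of B^alpha = B^{alpha_1} x ... x B^{alpha_k} *)
Definition vhom (B : Cat) (k : nat) (alpha : 'I_k -> bool) (S T : 'I_k -> B) :=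
  forall j : 'I_k, mhom B (alpha j) (S j) (T j).

Record MFunctor (B C : Cat) (k : nat) (alpha : 'I_k -> bool) := {
  fob :> ('I_k -> B) -> C;
  fmor : forall S T, vhom alpha S T -> hom (fob S) (fob T);
  fmor_id : forall S, fmor (fun j => mid B (alpha j) (S j)) = idm (fob S);
  fmor_comp : forall S T U (g : vhom alpha T U) (f : vhom alpha S T),
      fmor (fun j => mcomp (g j) (f j)) = cmp (fmor g) (fmor f) }.
Arguments fmor {B C k alpha} m {S T}.

Definition trans (B C : Cat) (a b n : nat) (alpha : 'I_a -> bool)
  (beta : 'I_b -> bool) (F : MFunctor B C alpha) (G : MFunctor B C beta)
  (sigma : 'I_a -> 'I_n) (tau : 'I_b -> 'I_n) :=
  forall A : 'I_n -> B, hom (F (fun j => A (sigma j))) (G (fun j => A (tau j))).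

Definition substn (B : Cat) (n : nat) (A : 'I_n -> B) (i : 'I_n) (X : B) :
  'I_n -> B := fun k => if k == i then X else A k.

(* A[X,Y/i]sigma  is  subst_ob sigma alpha A i (fun c => if c then Y else X):
   entry j is Z (alpha j) if sigma j = i, and A (sigma j) otherwise. *)
Definition subst_ob (B : Cat) (k n : nat) (sigma : 'I_k -> 'I_n)
  (alpha : 'I_k -> bool) (A : 'I_n -> B) (i : 'I_n) (Z : bool -> B) :
  'I_k -> B := fun j => if sigma j == i then Z (alpha j) else A (sigma j).

(* A[u,v/i]sigma : morphism from subst_ob .. Zs to subst_ob .. Zt, with
   u : Zt false -> Zs false (contravariant slots, a morphism of B^op
   from Zs false to Zt false) and v : Zs true -> Zt true (covariant slots);
   identities elsewhere. *)
Definition subst_mor (B : Cat) (k n : nat) (sigma : 'I_k -> 'I_n)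
  (alpha : 'I_k -> bool) (A : 'I_n -> B) (i : 'I_n) (Zs Zt : bool -> B)
  (u : hom (Zt false) (Zs false)) (v : hom (Zs true) (Zt true)) :
  vhom alpha (subst_ob sigma alpha A i Zs) (subst_ob sigma alpha A i Zt) :=
  fun j =>
  match sigma j == i as e return
    mhom B (alpha j) (if e then Zs (alpha j) else A (sigma j))
                     (if e then Zt (alpha j) else A (sigma j)) with
  | true => match alpha j as c return mhom B c (Zs c) (Zt c) with
            | true => v | false => u end
  | false => mid B (alpha j) (A (sigma j))
  end.
Arguments subst_mor {B k n} sigma alpha A i Zs Zt u v.

(* dinaturality in the i-th variable:
   G(A[X,f/i]tau) o phi_{A[X/i]} o F(A[f,X/i]sigma)
   = G(A[f,Y/i]tau) o phi_{A[Y/i]} o F(A[Y,f/i]sigma)   for f : X -> Y *)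
Definition dinatural_in (B C : Cat) (a b n : nat) (alpha : 'I_a -> bool)
  (beta : 'I_b -> bool) (F : MFunctor B C alpha) (G : MFunctor B C beta)
  (sigma : 'I_a -> 'I_n) (tau : 'I_b -> 'I_n) (phi : trans F G sigma tau)
  (i : 'I_n) : Prop :=
  forall (A : 'I_n -> B) (X Y : B) (f : hom X Y),
    cmp (fmor G (subst_mor tau beta A i (fun _ => X)
                  (fun c => if c then Y else X) (idm X) f))
      (cmp (phi (substn A i X))
         (fmor F (subst_mor sigma alpha A i (fun c => if c then X else Y)
                   (fun _ => X) f (idm X))))
    =
    cmp (fmor G (subst_mor tau beta A i (fun _ => Y)
                  (fun c => if c then Y else X) f (idm Y)))
      (cmp (phi (substn A i Y))
         (fmor F (subst_mor sigma alpha A i (fun c => if c then X else Y)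
                   (fun _ => Y) (idm Y) f))).

Definition dinatural (B C : Cat) (a b n : nat) (alpha : 'I_a -> bool)
  (beta : 'I_b -> bool) (F : MFunctor B C alpha) (G : MFunctor B C beta)
  (sigma : 'I_a -> 'I_n) (tau : 'I_b -> 'I_n) (phi : trans F G sigma tau) :
  Prop := forall i : 'I_n, dinatural_in phi i.

Record isPushout (b n m l : nat) (tau : 'I_b -> 'I_n) (eta : 'I_b -> 'I_m)
  (zeta : 'I_n -> 'I_l) (xi : 'I_m -> 'I_l) : Prop := {
  po_comm : forall j, zeta (tau j) = xi (eta j);
  po_univ : forall (K : finType) (p : 'I_n -> K) (q : 'I_m -> K),
    (forall j, p (tau j) = q (eta j)) ->
    exists u : 'I_l -> K,
      [/\ forall t, u (zeta t) = p t, forall t, u (xi t) = q t &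
          forall u' : 'I_l -> K, (forall t, u' (zeta t) = p t) ->
             (forall t, u' (xi t) = q t) -> forall x, u' x = u x] }.

(* vertical composite psi o phi : components psi_{A xi} o phi_{A zeta}
   (the identification G(A zeta tau) = G(A xi eta) is made via G applied to
   identity morphisms coming from zeta o tau = xi o eta). *)
Definition vcomp (B C : Cat) (a b c n m l : nat) (alpha : 'I_a -> bool)
  (beta : 'I_b -> bool) (gamma : 'I_c -> bool)
  (F : MFunctor B C alpha) (G : MFunctor B C beta) (H : MFunctor B C gamma)
  (sigma : 'I_a -> 'I_n) (tau : 'I_b -> 'I_n)
  (eta : 'I_b -> 'I_m) (theta : 'I_c -> 'I_m)
  (zeta : 'I_n -> 'I_l) (xi : 'I_m -> 'I_l)
  (hcomm : forall j, zeta (tau j) = xi (eta j))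
  (phi : trans F G sigma tau) (psi : trans G H eta theta) :
  trans F H (fun j => zeta (sigma j)) (fun j => xi (theta j)) :=
  fun A => cmp (psi (fun k => A (xi k)))
     (cmp (fmor G (fun j => mcast B (beta j) (f_equal A (hcomm j))))
          (phi (fun k => A (zeta k)))).

(* The composite graph Gamma(psi) o Gamma(phi): places alpha-, beta-,
   gamma-blocks, transitions n + m. *)
Definition cg_vertex (a b c n m : nat) : finType :=
  (('I_a + 'I_b) + 'I_c + ('I_n + 'I_m))%type.

Definition cg_edge (a b c n m : nat) (alpha : 'I_a -> bool)
  (beta : 'I_b -> bool) (gamma : 'I_c -> bool)
  (sigma : 'I_a -> 'I_n) (tau : 'I_b -> 'I_n)
  (eta : 'I_b -> 'I_m) (theta : 'I_c -> 'I_m) : rel (cg_vertex a b c n m) :=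
  fun v w =>
  match v, w with
  | inl (inl (inl j)), inr (inl t) => (sigma j == t) && alpha j
  | inr (inl t), inl (inl (inl j)) => (sigma j == t) && ~~ alpha j
  | inl (inl (inr j)), inr (inl t) => (tau j == t) && ~~ beta j
  | inr (inl t), inl (inl (inr j)) => (tau j == t) && beta j
  | inl (inl (inr j)), inr (inr t) => (eta j == t) && beta j
  | inr (inr t), inl (inl (inr j)) => (eta j == t) && ~~ beta j
  | inl (inr j), inr (inr t) => (theta j == t) && ~~ gamma j
  | inr (inr t), inl (inr j) => (theta j == t) && gamma j
  | _, _ => false
  end.

Definition acyclic (T : finType) (e : rel T) : Prop :=
  forall v w, e v w -> ~~ connect e w v.

(* Main.v *)
Require Import Defs.
From mathcomp Require Import all_boot.
From Stdlib Require Import ProofIrrelevance FunctionalExtensionality.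
From mathcomp Require Import zify.
Set Implicit Arguments. Unset Strict Implicit. Unset Printing Implicit Defensive.

Lemma TR (B C : Cat) a b n (al : 'I_a -> bool) (be : 'I_b -> bool)
  (F : MFunctor B C al) (G : MFunctor B C be) sg tu (chi : trans F G sg tu)
  (A1 A2 : 'I_n -> B) (e : A1 = A2) :
  chi A2 = cmp (fmor G (fun j => mcast B (be j) (f_equal (fun A => A (tu j)) e)))
     (cmp (chi A1) (fmor F (fun j => mcast B (al j) (f_equal (fun A => A (sg j)) (esym e))))).
Proof.
case: A2 / e => /=.
by rewrite (fmor_id G (fun j => A1 (tu j))) (fmor_id F (fun j => A1 (sg j))) cmp_idl cmp_idr.
Qed.

Section Thin.
Variables (B C : Cat) (X Y : B) (f : hom X Y) (l : nat) (A : 'I_l -> B) (i : 'I_l).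

Definition lv (p : bool * bool) : B :=
  if p.1 then (if p.2 then Y else X) else (if p.2 then X else Y).
Definition val (p : bool * bool) : bool := if p.1 then ~~ p.2 else p.2.
Definition lv0 (b : bool) : B := if b then X else Y.
Definition lm0 (b1 b2 : bool) : b2 ==> b1 -> hom (lv0 b1) (lv0 b2) :=
  match b1 as x1, b2 as x2 return x2 ==> x1 -> hom (lv0 x1) (lv0 x2) with
  | true, true => fun _ => idm X
  | true, false => fun _ => f
  | false, false => fun _ => idm Y
  | false, true => fun h => False_rect _ (eq_ind false (fun b => if b then False else True) I true h)
  end.
Definition lm (p1 p2 : bool * bool) : val p2 ==> val p1 -> hom (lv p1) (lv p2).
Proof.
case: p1 => [[] []]; case: p2 => [[] []];
match goal with |- _ -> hom (lv ?q1) (lv ?q2) => exact (@lm0 (val q1) (val q2)) end.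
Defined.
Definition cond (c : bool) (p1 p2 : bool * bool) : bool :=
  if c then val p2 ==> val p1 else val p1 ==> val p2.
Definition lmc (c : bool) (p1 p2 : bool*bool) : cond c p1 p2 -> mhom B c (lv p1) (lv p2) :=
 match c as c0 return cond c0 p1 p2 -> mhom B c0 (lv p1) (lv p2) with
 | true => fun h => @lm p1 p2 h
 | false => fun h => @lm p2 p1 h
 end.
Definition O (k : 'I_l) (p : bool * bool) : B := if k == i then lv p else A k.
Definition cm (c : bool) (k1 k2 : 'I_l) (e : k1 = k2) (p1 p2 : bool * bool)
  (h : k1 == i -> cond c p1 p2) : mhom B c (O k1 p1) (O k2 p2) :=
 match e in _ = k2' return mhom B c (O k1 p1) (O k2' p2) with
 | erefl => match k1 == i as q return ((is_true q -> cond c p1 p2) ->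
              mhom B c (if q then lv p1 else A k1) (if q then lv p2 else A k1)) with
   | true => fun h => lmc (h isT)
   | false => fun _ => mid B c (A k1)
   end h
 end.
Arguments cm c {k1 k2} e p1 p2 h.

Lemma cm_comp c k1 k2 k3 (e1 : k1 = k2) (e2 : k2 = k3) (e3 : k1 = k3) p1 p2 p3 h1 h2 h3 :
  mcomp (cm c e2 p2 p3 h2) (cm c e1 p1 p2 h1) = cm c e3 p1 p3 h3.
Proof.
case: k2 / e1 e2 h2 => e2 h2; case: k3 / e2 e3 h3 => e3 h3.
rewrite (proof_irrelevance _ e3 erefl) /cm /O /=.
move: h1 h2 h3; case: (k1 == i) => h1 h2 h3.
  move: (h1 isT) (h2 isT) (h3 isT); clear h1 h2 h3.
  case: c; case: p1 => [[] []]; case: p2 => [[] []]; case: p3 => [[] []] => //= *;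
  by rewrite ?cmp_idl ?cmp_idr.
clear h1 h2 h3; by case: c => /=; rewrite cmp_idl.
Qed.


Definition vcm (k : nat) (al : 'I_k -> bool) (kk1 kk2 : 'I_k -> 'I_l)
  (ee : forall j, kk1 j = kk2 j) (L1 L2 : 'I_k -> bool * bool)
  (hh : forall j, kk1 j == i -> cond (al j) (L1 j) (L2 j)) :
  vhom al (fun j => O (kk1 j) (L1 j)) (fun j => O (kk2 j) (L2 j)) :=
  fun j => cm (al j) (ee j) (L1 j) (L2 j) (hh j).
Arguments vcm {k} al {kk1 kk2} ee L1 L2 hh.

Lemma vcm_comp k (al : 'I_k -> bool) (Fn : MFunctor B C al) kk1 kk2 kk3
  (e1 : forall j, kk1 j = kk2 j) (e2 : forall j, kk2 j = kk3 j)
  (e3 : forall j, kk1 j = kk3 j) L1 L2 L3 h1 h2 h3 :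
  cmp (fmor Fn (vcm al e2 L2 L3 h2)) (fmor Fn (vcm al e1 L1 L2 h1))
  = fmor Fn (vcm al e3 L1 L3 h3).
Proof.
rewrite -fmor_comp; f_equal; apply: functional_extensionality_dep => j.
exact: cm_comp.
Qed.

Ltac pirr := repeat match goal with e : _ = _ |- _ =>
   (have {e}-> : e = erefl by apply: proof_irrelevance) end.

Section DD.
Variables (a' b' n' : nat) (al : 'I_a' -> bool) (be : 'I_b' -> bool)
  (F' : MFunctor B C al) (G' : MFunctor B C be)
  (sg : 'I_a' -> 'I_n') (tu : 'I_b' -> 'I_n') (chi : trans F' G' sg tu)
  (ka : 'I_n' -> 'I_l) (t : 'I_n') (S : 'I_n' -> bool).

Definition Zx := O (ka t) (true, false).
Definition Zy := O (ka t) (false, false).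
Definition fZ : hom Zx Zy := cm true (erefl (ka t)) (true, false) (false, false) (fun _ => isT).
Definition A0 := fun k => O (ka k) (S k, false).
Definition sx k := if k == t then true else S k.
Definition sy k := if k == t then false else S k.
Definition slotsub (k : 'I_n') (c : bool) (Zs Zt : bool -> B) (u : hom (Zt false) (Zs false)) (v : hom (Zs true) (Zt true)) :=
  subst_mor (fun _ : 'I_1 => k) (fun _ => c) A0 t Zs Zt u v ord0.
Arguments slotsub : clear implicits.

Ltac slot_tac k c := rewrite /slotsub /subst_mor /subst_ob /substn /cm /sx /sy /A0 /Zx /Zy /fZ /cm /O /=;
  case: (eqVneq k t) => [->|_];
  case: (ka _ == i); case: c => //=; try case: (S _) => //=;
  move=> *; pirr; simpl; rewrite ?cmp_idl ?cmp_idr //.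

Lemma GX k c (h : ka k == i -> cond c (sx k, false) (if k == t then (c, true) else (S k, false)))
  (e1 : substn A0 t Zx k = O (ka k) (sx k, false))
  (e2 : subst_ob (fun _ : 'I_1 => k) (fun _ => c) A0 t (fun c => if c then Zy else Zx) ord0
        = O (ka k) (if k == t then (c, true) else (S k, false))) :
  mcomp (cm c (erefl (ka k)) (sx k, false) (if k == t then (c, true) else (S k, false)) h) (mcast B c e1)
  = mcomp (mcast B c e2) (slotsub k c (fun _ => Zx) (fun c => if c then Zy else Zx) (idm Zx) fZ).
Proof. move: h e1 e2; slot_tac k c. Qed.


Lemma GY k c (h : ka k == i -> cond c (sy k, false) (if k == t then (c, true) else (S k, false)))
  (e1 : substn A0 t Zy k = O (ka k) (sy k, false))
  (e2 : subst_ob (fun _ : 'I_1 => k) (fun _ => c) A0 t (fun c => if c then Zy else Zx) ord0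
        = O (ka k) (if k == t then (c, true) else (S k, false))) :
  mcomp (cm c (erefl (ka k)) (sy k, false) (if k == t then (c, true) else (S k, false)) h) (mcast B c e1)
  = mcomp (mcast B c e2) (slotsub k c (fun _ => Zy) (fun c => if c then Zy else Zx) fZ (idm Zy)).
Proof. move: h e1 e2; slot_tac k c. Qed.

Lemma FX k c (h : ka k == i -> cond c (if k == t then (c, false) else (S k, false)) (sx k, false))
  (e1 : O (ka k) (sx k, false) = substn A0 t Zx k)
  (e2 : O (ka k) (if k == t then (c, false) else (S k, false)) =
        subst_ob (fun _ : 'I_1 => k) (fun _ => c) A0 t (fun c => if c then Zx else Zy) ord0) :
  mcomp (mcast B c e1) (cm c (erefl (ka k)) (if k == t then (c, false) else (S k, false)) (sx k, false) h)
  = mcomp (slotsub k c (fun c => if c then Zx else Zy) (fun _ => Zx) fZ (idm Zx)) (mcast B c e2).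
Proof. move: h e1 e2; slot_tac k c. Qed.

Lemma FY k c (h : ka k == i -> cond c (if k == t then (c, false) else (S k, false)) (sy k, false))
  (e1 : O (ka k) (sy k, false) = substn A0 t Zy k)
  (e2 : O (ka k) (if k == t then (c, false) else (S k, false)) =
        subst_ob (fun _ : 'I_1 => k) (fun _ => c) A0 t (fun c => if c then Zx else Zy) ord0) :
  mcomp (mcast B c e1) (cm c (erefl (ka k)) (if k == t then (c, false) else (S k, false)) (sy k, false) h)
  = mcomp (slotsub k c (fun c => if c then Zx else Zy) (fun _ => Zy) (idm Zy) fZ) (mcast B c e2).
Proof. move: h e1 e2; slot_tac k c. Qed.

Lemma castG j : subst_ob tu be A0 t (fun c => if c then Zy else Zx) j =
  O (ka (tu j)) (if tu j == t then (be j, true) else (S (tu j), false)).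
Proof.
rewrite /subst_ob /A0 /Zx /Zy /O; case: (eqVneq (tu j) t) => [->|_] //=.
by case: (ka t == i); case: (be j).
Qed.

Lemma castF j : O (ka (sg j)) (if sg j == t then (al j, false) else (S (sg j), false)) =
  subst_ob sg al A0 t (fun c => if c then Zx else Zy) j.
Proof.
rewrite /subst_ob /A0 /Zx /Zy /O; case: (eqVneq (sg j) t) => [->|_] //=.
by case: (ka t == i); case: (al j).
Qed.

Lemma Ex : substn A0 t Zx = (fun k => O (ka k) (sx k, false)).
Proof.
apply: functional_extensionality => k; rewrite /substn /sx /A0 /Zx.
by case: (eqVneq k t) => [->|_].
Qed.

Lemma Ey : substn A0 t Zy = (fun k => O (ka k) (sy k, false)).
Proof.
apply: functional_extensionality => k; rewrite /substn /sy /A0 /Zy.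
by case: (eqVneq k t) => [->|_].
Qed.

Lemma DDX h1 h2 :
 cmp (fmor G' (vcm be (fun j => erefl (ka (tu j))) (fun j => (sx (tu j), false))
        (fun j => if tu j == t then (be j, true) else (S (tu j), false)) h1))
   (cmp (chi (fun k => O (ka k) (sx k, false)))
     (fmor F' (vcm al (fun j => erefl (ka (sg j)))
        (fun j => if sg j == t then (al j, false) else (S (sg j), false))
        (fun j => (sx (sg j), false)) h2)))
 = cmp (fmor G' (fun j => mcast B (be j) (castG j)))
    (cmp (cmp (fmor G' (subst_mor tu be A0 t (fun _ => Zx) (fun c => if c then Zy else Zx) (idm Zx) fZ))
      (cmp (chi (substn A0 t Zx))
         (fmor F' (subst_mor sg al A0 t (fun c => if c then Zx else Zy) (fun _ => Zx) fZ (idm Zx)))))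
     (fmor F' (fun j => mcast B (al j) (castF j)))).
Proof.
rewrite (TR chi Ex).
rewrite !cmp_assoc -!fmor_comp -!cmp_assoc -!fmor_comp.
f_equal; [f_equal | f_equal; f_equal]; apply: functional_extensionality_dep => j.
  exact: (GX (k := tu j) (c := be j)).
exact: (FX (k := sg j) (c := al j)).
Qed.
Lemma DDY h1 h2 :
 cmp (fmor G' (vcm be (fun j => erefl (ka (tu j))) (fun j => (sy (tu j), false))
        (fun j => if tu j == t then (be j, true) else (S (tu j), false)) h1))
   (cmp (chi (fun k => O (ka k) (sy k, false)))
     (fmor F' (vcm al (fun j => erefl (ka (sg j)))
        (fun j => if sg j == t then (al j, false) else (S (sg j), false))
        (fun j => (sy (sg j), false)) h2)))
 = cmp (fmor G' (fun j => mcast B (be j) (castG j)))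
    (cmp (cmp (fmor G' (subst_mor tu be A0 t (fun _ => Zy) (fun c => if c then Zy else Zx) fZ (idm Zy)))
      (cmp (chi (substn A0 t Zy))
         (fmor F' (subst_mor sg al A0 t (fun c => if c then Zx else Zy) (fun _ => Zy) (idm Zy) fZ))))
     (fmor F' (fun j => mcast B (al j) (castF j)))).
Proof.
rewrite (TR chi Ey).
rewrite !cmp_assoc -!fmor_comp -!cmp_assoc -!fmor_comp.
f_equal; [f_equal | f_equal; f_equal]; apply: functional_extensionality_dep => j.
  exact: (GY (k := tu j) (c := be j)).
exact: (FY (k := sg j) (c := al j)).
Qed.

Lemma DD (hchi : dinatural_in chi t) h1 h2 h3 h4 :
 cmp (fmor G' (vcm be (fun j => erefl (ka (tu j))) (fun j => (sx (tu j), false))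
        (fun j => if tu j == t then (be j, true) else (S (tu j), false)) h1))
   (cmp (chi (fun k => O (ka k) (sx k, false)))
     (fmor F' (vcm al (fun j => erefl (ka (sg j)))
        (fun j => if sg j == t then (al j, false) else (S (sg j), false))
        (fun j => (sx (sg j), false)) h2)))
 =
 cmp (fmor G' (vcm be (fun j => erefl (ka (tu j))) (fun j => (sy (tu j), false))
        (fun j => if tu j == t then (be j, true) else (S (tu j), false)) h3))
   (cmp (chi (fun k => O (ka k) (sy k, false)))
     (fmor F' (vcm al (fun j => erefl (ka (sg j)))
        (fun j => if sg j == t then (al j, false) else (S (sg j), false))
        (fun j => (sy (sg j), false)) h4))).
Proof. by rewrite DDX DDY (hchi A0 Zx Zy fZ). Qed.
End DD.

Definition sm1 (k : 'I_l) (c : bool) (Zs Zt : bool -> B) (u : hom (Zt false) (Zs false)) (v : hom (Zs true) (Zt true)) :=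
  subst_mor (fun _ : 'I_1 => k) (fun _ => c) A i Zs Zt u v ord0.
Arguments sm1 : clear implicits.

Ltac sl_tac c := rewrite /sm1 /subst_mor /cm /O /=; case: (_ == i); case: (c) => //=.

Lemma slotH1 k c h : cm c (erefl k) (true,false) (c,true) h =
  sm1 k c (fun _ => X) (fun c => if c then Y else X) (idm X) f.
Proof. move: h; sl_tac c. Qed.
Lemma slotF1 k c h : cm c (erefl k) (c,false) (true,false) h =
  sm1 k c (fun c => if c then X else Y) (fun _ => X) f (idm X).
Proof. move: h; sl_tac c. Qed.
Lemma slotH2 k c h : cm c (erefl k) (false,false) (c,true) h =
  sm1 k c (fun _ => Y) (fun c => if c then Y else X) f (idm Y).
Proof. move: h; sl_tac c. Qed.
Lemma slotF2 k c h : cm c (erefl k) (c,false) (false,false) h =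
  sm1 k c (fun c => if c then X else Y) (fun _ => Y) (idm Y) f.
Proof. move: h; sl_tac c. Qed.
Lemma slotG1 c k1 k2 (e : k1 = k2) h : cm c e (true,false) (true,false) h =
  mcast B c (f_equal (substn A i X) e).
Proof. case: k2 / e; move: h; rewrite /cm /O /substn /=; case: (k1 == i); case: c => //=. Qed.
Lemma slotG2 c k1 k2 (e : k1 = k2) h : cm c e (false,false) (false,false) h =
  mcast B c (f_equal (substn A i Y) e).
Proof. case: k2 / e; move: h; rewrite /cm /O /substn /=; case: (k1 == i); case: c => //=. Qed.

Lemma condF c b : cond c (c,false) (b,false).
Proof. by case: c; case: b. Qed.
Lemma condH c b : cond c (b,false) (c,true).
Proof. by case: c; case: b. Qed.
Lemma cond_refl c p : cond c p p.
Proof. by case: c; case: p => [[] []]. Qed.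

Section Main.
Variables (a b cc n m : nat) (alpha : 'I_a -> bool) (beta : 'I_b -> bool)
  (gamma : 'I_cc -> bool) (F : MFunctor B C alpha) (G : MFunctor B C beta)
  (H : MFunctor B C gamma) (sigma : 'I_a -> 'I_n) (tau : 'I_b -> 'I_n)
  (eta : 'I_b -> 'I_m) (theta : 'I_cc -> 'I_m)
  (phi : trans F G sigma tau) (psi : trans G H eta theta)
  (zeta : 'I_n -> 'I_l) (xi : 'I_m -> 'I_l)
  (hcomm : forall j, zeta (tau j) = xi (eta j))
  (hphi : dinatural phi) (hpsi : dinatural psi)
  (hacyc : acyclic (cg_edge alpha beta gamma sigma tau eta theta)).

Definition okS (SA : 'I_n -> bool) (SB : 'I_m -> bool) :=
  forall j, zeta (tau j) == i -> cond (beta j) (SA (tau j), false) (SB (eta j), false).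

Definition Hm SB := fmor H (vcm gamma (fun j => erefl (xi (theta j)))
   (fun j => (SB (theta j), false)) (fun j => (gamma j, true))
   (fun j _ => condH (gamma j) (SB (theta j)))).
Definition Fm SA := fmor F (vcm alpha (fun j => erefl (zeta (sigma j)))
   (fun j => (alpha j, false)) (fun j => (SA (sigma j), false))
   (fun j _ => condF (alpha j) (SA (sigma j)))).

Definition M SA SB (h : okS SA SB) :=
 cmp (Hm SB)
  (cmp (psi (fun k => O (xi k) (SB k, false)))
   (cmp (fmor G (vcm beta hcomm (fun j => (SA (tau j), false)) (fun j => (SB (eta j), false)) h))
    (cmp (phi (fun k => O (zeta k) (SA k, false))) (Fm SA)))).
Arguments M : clear implicits.

Lemma M_ext SA1 SA2 SB1 SB2 h1 h2 : SA1 = SA2 -> SB1 = SB2 -> M SA1 SB1 h1 = M SA2 SB2 h2.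
Proof. move=> e1 e2; subst; f_equal; exact: proof_irrelevance. Qed.

Lemma okT : okS (fun _ => true) (fun _ => true).
Proof. by move=> j _; exact: cond_refl. Qed.
Lemma okF : okS (fun _ => false) (fun _ => false).
Proof. by move=> j _; exact: cond_refl. Qed.

Lemma start :
    cmp (fmor H (subst_mor (fun j => xi (theta j)) gamma A i (fun _ => X)
                  (fun c => if c then Y else X) (idm X) f))
      (cmp (vcomp hcomm phi psi (substn A i X))
         (fmor F (subst_mor (fun j => zeta (sigma j)) alpha A i (fun c => if c then X else Y)
                   (fun _ => X) f (idm X))))
  = M _ _ okT.
Proof.
rewrite /M /vcomp /Hm /Fm -!cmp_assoc.
f_equal; [f_equal | f_equal; f_equal; [f_equal | f_equal; f_equal]];
  apply: functional_extensionality_dep => j; rewrite /vcm.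
- symmetry; apply: slotH1.
- exact: (esym (slotG1 _ _)).
- symmetry; apply: slotF1.
Qed.

Lemma finish :
    cmp (fmor H (subst_mor (fun j => xi (theta j)) gamma A i (fun _ => Y)
                  (fun c => if c then Y else X) f (idm Y)))
      (cmp (vcomp hcomm phi psi (substn A i Y))
         (fmor F (subst_mor (fun j => zeta (sigma j)) alpha A i (fun c => if c then X else Y)
                   (fun _ => Y) (idm Y) f)))
  = M _ _ okF.
Proof.
rewrite /M /vcomp /Hm /Fm -!cmp_assoc.
f_equal; [f_equal | f_equal; f_equal; [f_equal | f_equal; f_equal]];
  apply: functional_extensionality_dep => j; rewrite /vcm.
- symmetry; apply: slotH2.
- exact: (esym (slotG2 _ _)).
- symmetry; apply: slotF2.
Qed.

Lemma M_factor_phi SA SB h (Ltg : 'I_b -> bool*bool) (Lsr : 'I_a -> bool*bool) g1 g2 f1 f2 :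
 M SA SB h = cmp (Hm SB) (cmp (psi (fun k => O (xi k) (SB k, false)))
   (cmp (fmor G (vcm beta hcomm Ltg (fun j => (SB (eta j), false)) g2))
    (cmp (cmp (fmor G (vcm beta (fun j => erefl (zeta (tau j))) (fun j => (SA (tau j), false)) Ltg g1))
              (cmp (phi (fun k => O (zeta k) (SA k, false)))
                   (fmor F (vcm alpha (fun j => erefl (zeta (sigma j))) Lsr (fun j => (SA (sigma j), false)) f2))))
         (fmor F (vcm alpha (fun j => erefl (zeta (sigma j))) (fun j => (alpha j, false)) Lsr f1))))).
Proof.
rewrite /M /Fm -(@vcm_comp _ beta G _ _ _ (fun j => erefl (zeta (tau j))) hcomm hcomm _ Ltg _ g1 g2 h).
rewrite -(@vcm_comp _ alpha F _ _ _ (fun j => erefl (zeta (sigma j))) (fun j => erefl (zeta (sigma j))) (fun j => erefl (zeta (sigma j))) _ Lsr _ f1 f2).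
by rewrite -!cmp_assoc.
Qed.

Lemma M_factor_psi SA SB h (Ltg : 'I_cc -> bool*bool) (Lsr : 'I_b -> bool*bool) k1 k2 k3 k4 :
 M SA SB h = cmp (fmor H (vcm gamma (fun j => erefl (xi (theta j))) Ltg (fun j => (gamma j, true)) k1))
   (cmp (cmp (fmor H (vcm gamma (fun j => erefl (xi (theta j))) (fun j => (SB (theta j), false)) Ltg k2))
           (cmp (psi (fun k => O (xi k) (SB k, false)))
                (fmor G (vcm beta (fun j => erefl (xi (eta j))) Lsr (fun j => (SB (eta j), false)) k3))))
        (cmp (fmor G (vcm beta hcomm (fun j => (SA (tau j), false)) Lsr k4))
             (cmp (phi (fun k => O (zeta k) (SA k, false))) (Fm SA)))).
Proof.
rewrite /M /Hm -(@vcm_comp _ gamma H _ _ _ (fun j => erefl (xi (theta j))) (fun j => erefl (xi (theta j))) (fun j => erefl (xi (theta j))) _ Ltg _ k2 k1 (fun j _ => condH (gamma j) (SB (theta j)))).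
rewrite -(@vcm_comp _ beta G _ _ _ hcomm (fun j => erefl (xi (eta j))) hcomm _ Lsr _ k4 k3 h).
by rewrite -!cmp_assoc.
Qed.

Lemma phi_step (t : 'I_n) SA SB
  (hmax : forall j, tau j = t -> beta j -> SB (eta j) = false) h1 h2 :
  M (sx t SA) SB h1 = M (sy t SA) SB h2.
Proof.
pose Ltg := fun j => if tau j == t then (beta j, true) else (SA (tau j), false).
pose Lsr := fun j => if sigma j == t then (alpha j, false) else (SA (sigma j), false).
have f1 : forall j, zeta (sigma j) == i -> cond (alpha j) (alpha j, false) (Lsr j).
  by move=> j _; rewrite /Lsr; case: (sigma j == t); [exact: cond_refl | exact: condF].
have f2x : forall j, zeta (sigma j) == i -> cond (alpha j) (Lsr j) (sx t SA (sigma j), false).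
  by move=> j _; rewrite /Lsr /sx; case: (sigma j == t); [exact: condF | exact: cond_refl].
have f2y : forall j, zeta (sigma j) == i -> cond (alpha j) (Lsr j) (sy t SA (sigma j), false).
  by move=> j _; rewrite /Lsr /sy; case: (sigma j == t); [exact: condF | exact: cond_refl].
have g1x : forall j, zeta (tau j) == i -> cond (beta j) (sx t SA (tau j), false) (Ltg j).
  by move=> j _; rewrite /Ltg /sx; case: (tau j == t); [exact: condH | exact: cond_refl].
have g1y : forall j, zeta (tau j) == i -> cond (beta j) (sy t SA (tau j), false) (Ltg j).
  by move=> j _; rewrite /Ltg /sy; case: (tau j == t); [exact: condH | exact: cond_refl].
have g2 : forall j, zeta (tau j) == i -> cond (beta j) (Ltg j) (SB (eta j), false).
  move=> j hj; have := h1 j hj; rewrite /Ltg /sx.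
  case: (eqVneq (tau j) t) => [E|ne] //=.
  by move: (hmax j E); case: (beta j) => //= ->.
rewrite (@M_factor_phi (sx t SA) SB h1 Ltg Lsr g1x g2 f1 f2x) (@M_factor_phi (sy t SA) SB h2 Ltg Lsr g1y g2 f1 f2y).
by rewrite (DD (hphi t) g1x f2x g1y f2y).
Qed.

Lemma psi_step (s : 'I_m) SA SB
  (hmax : forall j, eta j = s -> ~~ beta j -> SA (tau j) = false) h1 h2 :
  M SA (sx s SB) h1 = M SA (sy s SB) h2.
Proof.
pose Ltg := fun j => if theta j == s then (gamma j, true) else (SB (theta j), false).
pose Lsr := fun j => if eta j == s then (beta j, false) else (SB (eta j), false).
have k1 : forall j, xi (theta j) == i -> cond (gamma j) (Ltg j) (gamma j, true).
  by move=> j _; rewrite /Ltg; case: (theta j == s); [exact: cond_refl | exact: condH].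
have k2x : forall j, xi (theta j) == i -> cond (gamma j) (sx s SB (theta j), false) (Ltg j).
  by move=> j _; rewrite /Ltg /sx; case: (theta j == s); [exact: condH | exact: cond_refl].
have k2y : forall j, xi (theta j) == i -> cond (gamma j) (sy s SB (theta j), false) (Ltg j).
  by move=> j _; rewrite /Ltg /sy; case: (theta j == s); [exact: condH | exact: cond_refl].
have k3x : forall j, xi (eta j) == i -> cond (beta j) (Lsr j) (sx s SB (eta j), false).
  by move=> j _; rewrite /Lsr /sx; case: (eta j == s); [exact: condF | exact: cond_refl].
have k3y : forall j, xi (eta j) == i -> cond (beta j) (Lsr j) (sy s SB (eta j), false).
  by move=> j _; rewrite /Lsr /sy; case: (eta j == s); [exact: condF | exact: cond_refl].
have k4 : forall j, zeta (tau j) == i -> cond (beta j) (SA (tau j), false) (Lsr j).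
  move=> j hj; have := h1 j hj; rewrite /Lsr /sx.
  case: (eqVneq (eta j) s) => [E|ne] //=.
  by move: (hmax j E); case: (beta j) => //= ->.
rewrite (@M_factor_psi SA (sx s SB) h1 Ltg Lsr k1 k2x k3x k4) (@M_factor_psi SA (sy s SB) h2 Ltg Lsr k1 k2y k3y k4).
by rewrite (DD (hpsi s) k2x k3x k2y k3y).
Qed.

Lemma exists_max (SA : 'I_n -> bool) (SB : 'I_m -> bool) :
  (exists t, SA t) \/ (exists s, SB s) ->
  (exists t, SA t /\ forall j, tau j = t -> beta j -> SB (eta j) = false) \/
  (exists s, SB s /\ forall j, eta j = s -> ~~ beta j -> SA (tau j) = false).
Proof.
move=> hex.
set e := cg_edge alpha beta gamma sigma tau eta theta.
pose V (v : cg_vertex a b cc n m) := match v with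
  | inr (inl t) => SA t | inr (inr s) => SB s | _ => false end.
pose r v := #|[set w | connect e v w]|.
have exV : exists k, [exists v, V v && (r v == k)].
  case: hex => [[t St]|[s Ss]].
    by exists (r (inr (inl t))); apply/existsP; exists (inr (inl t)); rewrite /V St eqxx.
  by exists (r (inr (inr s))); apply/existsP; exists (inr (inr s)); rewrite /V Ss eqxx.
case: (ex_minnP exV) => k /existsP [v /andP[Vv /eqP rv]] kmin.
have key : forall p w, e v p -> e p w -> V w -> False.
  move=> p w evp epw Vw.
  have le : k <= r w by apply: kmin; apply/existsP; exists w; rewrite Vw eqxx.
  have sub : [set x | connect e w x] \proper [set x | connect e v x].
    apply/properP; split.
      apply/subsetP => x; rewrite !inE => cwx.
      exact: connect_trans (connect_trans (connect1 evp) (connect1 epw)) cwx.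
    exists v; rewrite !inE ?connect0 //.
    apply/negP => cwv; move: (hacyc evp).
    by rewrite (connect_trans (connect1 epw) cwv).
  have := proper_card sub; rewrite -/(r w) -/(r v) rv.
  by rewrite ltnNge le.
move: v Vv rv key => [[[]|]|[t|s]] //= Vv _ key.
  left; exists t; split => // j E bj; apply/negbTE/negP => Sb.
  apply: (key (inl (inl (inr j))) (inr (inr (eta j)))) => //=.
    by rewrite E eqxx bj.
  by rewrite eqxx bj.
right; exists s; split => // j E bj; apply/negbTE/negP => Sb.
apply: (key (inl (inl (inr j))) (inr (inl (tau j)))) => //=.
  by rewrite E eqxx bj.
by rewrite eqxx bj.
Qed.

Lemma card_sy (p : nat) (Sf : 'I_p -> bool) t : Sf t ->
  #|[pred k | Sf k]| = (#|[pred k | sy t Sf k]|).+1.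
Proof.
move=> St; rewrite (cardD1 t) inE St add1n; congr (_.+1).
by apply: eq_card => k; rewrite !inE /sy; case: eqVneq.
Qed.

Lemma main_ind N : forall SA SB (h : okS SA SB),
  #|[pred t | SA t]| + #|[pred s | SB s]| = N -> M SA SB h = M _ _ okF.
Proof.
elim: N => [|N IH] SA SB h hN.
  move/eqP: hN; rewrite addn_eq0 => /andP[/eqP hA /eqP hB].
  apply: M_ext; apply: functional_extensionality => k; apply/negP => Sk.
    by move: hA; rewrite (cardD1 k) inE Sk.
  by move: hB; rewrite (cardD1 k) inE Sk.
have hex : (exists t, SA t) \/ (exists s, SB s).
  case: (pickP [pred t | SA t]) => [t St|A0]; first by left; exists t.
  case: (pickP [pred s | SB s]) => [s Ss|B0]; first by right; exists s.
  by move: hN; rewrite (eq_card0 A0) (eq_card0 B0).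
case: (exists_max hex) => [[t [St hmax]]|[s [Ss hmax]]].
  have eSA : SA = sx t SA.
    by apply: functional_extensionality => k; rewrite /sx; case: eqVneq => [->|].
  have h' : okS (sx t SA) SB by rewrite -eSA.
  have h2 : okS (sy t SA) SB.
    move=> j hj; have := h j hj; rewrite /sy.
    case: (eqVneq (tau j) t) => [E|_] //= _.
    by move: (hmax j E); case: (beta j) => //= ->.
  rewrite (M_ext h h' eSA erefl) (phi_step hmax h' h2).
  apply: IH; by move: hN; rewrite (card_sy St) addSn => -[].
have eSB : SB = sx s SB.
  by apply: functional_extensionality => k; rewrite /sx; case: eqVneq => [->|].
have h' : okS SA (sx s SB) by rewrite -eSB.
have h2 : okS SA (sy s SB).
  move=> j hj; have := h j hj; rewrite /sy.
  case: (eqVneq (eta j) s) => [E|_] //= _.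
  by move: (hmax j E); case: (beta j) => //= ->.
rewrite (M_ext h h' erefl eSB) (psi_step hmax h' h2).
apply: IH; by move: hN; rewrite (card_sy Ss) addnS => -[].
Qed.

End Main.
End Thin.

Theorem mainTheorem4 (B C : Cat) (a b c n m : nat)
  (alpha : 'I_a -> bool) (beta : 'I_b -> bool) (gamma : 'I_c -> bool)
  (F : MFunctor B C alpha) (G : MFunctor B C beta) (H : MFunctor B C gamma)
  (sigma : 'I_a -> 'I_n) (tau : 'I_b -> 'I_n)
  (eta : 'I_b -> 'I_m) (theta : 'I_c -> 'I_m)
  (phi : trans F G sigma tau) (psi : trans G H eta theta)
  (hphi : dinatural phi) (hpsi : dinatural psi)
  (hacyc : acyclic (cg_edge alpha beta gamma sigma tau eta theta))
  (l : nat) (zeta : 'I_n -> 'I_l) (xi : 'I_m -> 'I_l)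
  (hpo : isPushout tau eta zeta xi) :
  dinatural (vcomp (po_comm hpo) phi psi).
Proof.
move=> i A X Y f.
rewrite start finish.
exact: (main_ind f A (po_comm hpo) hphi hpsi hacyc _ erefl).
Qed.
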